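(* Suppose (A.1) $\nabla f$ is Lipschitz continuous on $\mathbb{R}^n$ with modulus $L>0$ and (A.3) there are $\mu_f\in\mathbb{R}$, $\mu_r\ge0$ with $\bar\mu:=\mu_f+\mu_r>0$ such that $f-\frac{\mu_f}{2}\|\cdot\|^2$ and $r-\frac{\mu_r}{2}\|\cdot\|^2$ are convex. Let $\Lambda\in\mathbb S^n_{++}$ with $\lambda_MI\succeq\Lambda\succeq\lambda_mI$, and let $x^*$ be the unique minimizer of $\psi=f+r$. For $\tau>0$ set $$b_1:=L-2\lambda_m-\mu_r,\quad b_2:=\frac{(\lambda_M+\mu_r)^2}{\bar\mu},\quad B_1(\tau):=\frac{1+\tau}{\bar\mu}\big(\sqrt{b_1+b_2+\tau}+\sqrt{b_2}\big)^2.$$ Then for each $\tau>0$ there is a constant $B_2(\tau)>0$ (depending only on $\tau$ and on $L,\mu_f,\mu_r,\lambda_m,\lambda_M$) such that for all $x\in\mathbb{R}^n$ and every sample mini-batch $s$, $$\|x-x^*\|^2\le B_1(\tau)\|F^\Lambda_s(x)\|^2+B_2(\tau)\|\nabla f(x)-G_s(x)\|^2.$$ If the exact gradient is used (i.e. $G_s\equiv\nabla f$), then $\|x-x^*\|^2\le B_1(0)\|F^\Lambda(x)\|^2$ for all $x$.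
   Context: $f:\mathbb{R}^n\to\mathbb{R}$ continuously differentiable, $r:\mathbb{R}^n\to(-\infty,+\infty]$ convex, lsc, proper, $\psi:=f+r$. For $\Lambda\in\mathbb S^n_{++}$, $\|x\|_\Lambda^2=\langle x,\Lambda x\rangle$, $\mathrm{prox}^\Lambda_r(x):=\arg\min_y r(y)+\frac12\|x-y\|_\Lambda^2$, $F^\Lambda(x):=x-\mathrm{prox}^\Lambda_r(x-\Lambda^{-1}\nabla f(x))$. A sample mini-batch $s$ yields a stochastic gradient $G_s(x)\in\mathbb{R}^n$ (e.g. $G_s(x)=\frac1m\sum_i\mathcal G(x,s_i)$ for an oracle $\mathcal G$), and $F^\Lambda_s(x):=x-\mathrm{prox}^\Lambda_r(x-\Lambda^{-1}G_s(x))$. Note that $b_1+b_2\ge0$ under the assumptions. *)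

(* Defs.v *)
From mathcomp Require Import all_boot.
From Stdlib Require Import Reals.

Set Implicit Arguments.
Unset Strict Implicit.
Unset Printing Implicit Defensive.

Local Open Scope R_scope.

Definition vec (n : nat) := 'I_n -> R.
Definition mat (n : nat) := 'I_n -> 'I_n -> R.

Definition vsum n (u : 'I_n -> R) : R := \big[Rplus/0]_(i < n) u i.

Definition vadd n (x y : vec n) : vec n := fun i => x i + y i.
Definition vsub n (x y : vec n) : vec n := fun i => x i - y i.
Definition vscale n (a : R) (x : vec n) : vec n := fun i => a * x i.
Definition vzero n : vec n := fun _ => 0.

Definition inner n (x y : vec n) : R := vsum (fun i => x i * y i).
Definition norm2 n (x : vec n) : R := inner x x.
Definition norm n (x : vec n) : R := sqrt (norm2 x).

Definition matvec n (A : mat n) (x : vec n) : vec n :=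
  fun i => vsum (fun j => A i j * x j).
Definition matmul n (A B : mat n) : mat n :=
  fun i k => vsum (fun j => A i j * B j k).
Definition idmat n : mat n := fun i j => if i == j then 1 else 0.
Definition symmetric n (A : mat n) : Prop := forall i j, A i j = A j i.

Definition sym_pos_def n (A : mat n) : Prop :=
  symmetric A /\ forall x : vec n, x <> @vzero n -> 0 < inner x (matvec A x).

Definition loewner_bounds n (lm lM : R) (A : mat n) : Prop :=
  forall x : vec n, lm * norm2 x <= inner x (matvec A x) <= lM * norm2 x.

Definition normA2 n (A : mat n) (x : vec n) : R := inner x (matvec A x).

(** Extended reals (-infty excluded): [Some a] is the real a, [None] is +infty. *)
Definition ereal := option R.
Definition ER_le (a b : ereal) : Prop :=
  match a, b with
  | _, None => True
  | None, Some _ => False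
  | Some x, Some y => x <= y
  end.
Definition ER_lt (a b : ereal) : Prop :=
  match a, b with
  | Some x, None => True
  | None, _ => False
  | Some x, Some y => x < y
  end.
Definition ER_add (a b : ereal) : ereal :=
  match a, b with Some x, Some y => Some (x + y) | _, _ => None end.
Definition ER_addR (c : R) (a : ereal) : ereal :=
  match a with Some x => Some (c + x) | None => None end.
Definition ER_scale (t : R) (a : ereal) : ereal :=
  match a with Some x => Some (t * x) | None => None end.

Definition ext_convex n (g : vec n -> ereal) : Prop :=
  forall (x y : vec n) (t : R), 0 < t < 1 ->
    ER_le (g (vadd (vscale t x) (vscale (1 - t) y)))
          (ER_add (ER_scale t (g x)) (ER_scale (1 - t) (g y))).

Definition convex n (g : vec n -> R) : Prop :=
  forall (x y : vec n) (t : R), 0 <= t <= 1 ->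
    g (vadd (vscale t x) (vscale (1 - t) y)) <= t * g x + (1 - t) * g y.

Definition ext_lsc n (g : vec n -> ereal) : Prop :=
  forall (x : vec n) (a : R), ER_lt (Some a) (g x) ->
    exists delta, 0 < delta /\
      forall y : vec n, norm (vsub y x) < delta -> ER_lt (Some a) (g y).

Definition ext_proper n (g : vec n -> ereal) : Prop :=
  exists x : vec n, g x <> None.

Definition is_gradient n (f : vec n -> R) (gradf : vec n -> vec n) : Prop :=
  forall (x : vec n) (eps : R), 0 < eps ->
    exists delta, 0 < delta /\
      forall h : vec n, norm h < delta ->
        Rabs (f (vadd x h) - f x - inner (gradf x) h) <= eps * norm h.

Definition vcontinuous n (F : vec n -> vec n) : Prop :=
  forall (x : vec n) (eps : R), 0 < eps ->
    exists delta, 0 < delta /\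
      forall y : vec n, norm (vsub y x) < delta -> norm (vsub (F y) (F x)) < eps.

Definition C1_with_gradient n (f : vec n -> R) (gradf : vec n -> vec n) : Prop :=
  is_gradient f gradf /\ vcontinuous gradf.

Definition lipschitz n (L : R) (F : vec n -> vec n) : Prop :=
  forall x y : vec n, norm (vsub (F x) (F y)) <= L * norm (vsub x y).

Definition is_prox n (Lam : mat n) (r : vec n -> ereal) (z p : vec n) : Prop :=
  forall y : vec n,
    ER_le (ER_addR (/2 * normA2 Lam (vsub z p)) (r p))
          (ER_addR (/2 * normA2 Lam (vsub z y)) (r y)).

(** p = prox^Lambda_r(x - Lambda^{-1} G), so that the (stochastic)
    prox-gradient residual is F = x - p. Here [Laminv] is the inverse of Lambda. *)
Definition is_prox_grad_point n (Lam Laminv : mat n) (r : vec n -> ereal)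
    (G : vec n) (x p : vec n) : Prop :=
  is_prox Lam r (vsub x (matvec Laminv G)) p.

Definition psi n (f : vec n -> R) (r : vec n -> ereal) (x : vec n) : ereal :=
  ER_addR (f x) (r x).

Definition setting n (L muf mur lm lM : R) (f : vec n -> R) (gradf : vec n -> vec n)
    (r : vec n -> ereal) (Lam Laminv : mat n) (xstar : vec n) : Prop :=
  C1_with_gradient f gradf /\
  ext_convex r /\ ext_lsc r /\ ext_proper r /\
  lipschitz L gradf /\
  convex (fun x => f x - muf / 2 * norm2 x) /\
  ext_convex (fun x => ER_addR (- (mur / 2 * norm2 x)) (r x)) /\
  sym_pos_def Lam /\ loewner_bounds lm lM Lam /\
  matmul Lam Laminv = @idmat n /\ matmul Laminv Lam = @idmat n /\
  (forall y : vec n, ER_le (psi f r xstar) (psi f r y)).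

Definition mubar (muf mur : R) : R := muf + mur.
Definition b1 (L mur lm : R) : R := L - 2 * lm - mur.
Definition b2 (muf mur lM : R) : R := (lM + mur) ^ 2 / mubar muf mur.
Definition B1coef (L muf mur lm lM tau : R) : R :=
  (1 + tau) / mubar muf mur *
  (sqrt (b1 L mur lm + b2 muf mur lM + tau) + sqrt (b2 muf mur lM)) ^ 2.

(* Main.v *)
Require Import Defs.
From HB Require Import structures.
From mathcomp Require Import all_boot.
From Stdlib Require Import Reals Lra Psatz FunctionalExtensionality.
Set Implicit Arguments.
Unset Strict Implicit.
Local Open Scope R_scope.

Lemma Rplus_assoc' : associative Rplus. Proof. move=> *; ring. Qed.
Lemma Rplus_comm' : commutative Rplus. Proof. move=> *; ring. Qed.
Lemma Rplus_0_l' : left_id 0 Rplus. Proof. move=> *; ring. Qed.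
HB.instance Definition _ := Monoid.isComLaw.Build R 0 Rplus Rplus_assoc' Rplus_comm' Rplus_0_l'.

Lemma vsum_add n (u v : 'I_n -> R) : vsum (fun i => u i + v i) = vsum u + vsum v.
Proof. by rewrite /vsum big_split. Qed.

Lemma vsum_scale n a (u : 'I_n -> R) : vsum (fun i => a * u i) = a * vsum u.
Proof.
rewrite /vsum; symmetry; apply: (big_morph (fun x => a * x) (id1 := 0) (op1 := Rplus) (id2 := 0) (op2 := Rplus)).
- move=> x y /=; ring.
- ring.
Qed.

Lemma vsum_ext n (u v : 'I_n -> R) : (forall i, u i = v i) -> vsum u = vsum v.
Proof. by move=> H; rewrite /vsum; apply: eq_bigr => i _. Qed.
Arguments vsum_ext {n u v}.

Lemma vsum_le n (u v : 'I_n -> R) : (forall i, u i <= v i) -> vsum u <= vsum v.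
Proof.
move=> H; rewrite /vsum; apply: (big_ind2 (fun x y => x <= y)) => //.
- lra.
- move=> *; lra.
Qed.

Lemma vsum_swap n (A : 'I_n -> 'I_n -> R) :
  vsum (fun i => vsum (fun j => A i j)) = vsum (fun j => vsum (fun i => A i j)).
Proof. rewrite /vsum; exact: exchange_big. Qed.

Lemma vsum0 n : vsum (fun _ : 'I_n => 0) = 0.
Proof. rewrite /vsum big1 //. Qed.

Lemma vsum_sub n (u v : 'I_n -> R) : vsum (fun i => u i - v i) = vsum u - vsum v.
Proof.
rewrite (vsum_ext (v := fun i => u i + (-1) * v i)); last by move=> i; ring.
rewrite vsum_add vsum_scale; ring.
Qed.

Lemma inner_sym n (x y : vec n) : inner x y = inner y x.
Proof. apply: vsum_ext => i; ring. Qed.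

Lemma inner_subl n (x y z : vec n) : inner (vsub x y) z = inner x z - inner y z.
Proof. rewrite /inner -vsum_sub; apply: vsum_ext => i; rewrite /vsub; ring. Qed.
Lemma inner_subr n (x y z : vec n) : inner z (vsub x y) = inner z x - inner z y.
Proof. rewrite /inner -vsum_sub; apply: vsum_ext => i; rewrite /vsub; ring. Qed.
Lemma inner_addl n (x y z : vec n) : inner (vadd x y) z = inner x z + inner y z.
Proof. rewrite /inner -vsum_add; apply: vsum_ext => i; rewrite /vadd; ring. Qed.
Lemma inner_addr n (x y z : vec n) : inner z (vadd x y) = inner z x + inner z y.
Proof. rewrite /inner -vsum_add; apply: vsum_ext => i; rewrite /vadd; ring. Qed.
Lemma inner_scalel n a (x z : vec n) : inner (vscale a x) z = a * inner x z.
Proof. rewrite /inner -vsum_scale; apply: vsum_ext => i; rewrite /vscale; ring. Qed.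
Lemma inner_scaler n a (x z : vec n) : inner z (vscale a x) = a * inner z x.
Proof. rewrite /inner -vsum_scale; apply: vsum_ext => i; rewrite /vscale; ring. Qed.

Lemma norm2_ge0 n (x : vec n) : 0 <= norm2 x.
Proof.
rewrite /norm2 /inner -(vsum0 n); apply: vsum_le => i; nra.
Qed.

Lemma norm_sq n (x : vec n) : norm x * norm x = norm2 x.
Proof. rewrite /norm sqrt_sqrt //; exact: norm2_ge0. Qed.
Lemma norm_ge0 n (x : vec n) : 0 <= norm x.
Proof. exact: sqrt_pos. Qed.

Lemma matvec_sub n (A : mat n) x y : matvec A (vsub x y) = vsub (matvec A x) (matvec A y).
Proof.
apply: functional_extensionality => i; rewrite /matvec /vsub -vsum_sub.
apply: vsum_ext => j; ring.
Qed.
Lemma matvec_add n (A : mat n) x y : matvec A (vadd x y) = vadd (matvec A x) (matvec A y).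
Proof.
apply: functional_extensionality => i; rewrite /matvec /vadd -vsum_add.
apply: vsum_ext => j; ring.
Qed.
Lemma matvec_scale n (A : mat n) a x : matvec A (vscale a x) = vscale a (matvec A x).
Proof.
apply: functional_extensionality => i; rewrite /matvec /vscale -vsum_scale.
apply: vsum_ext => j; ring.
Qed.

Lemma inner_matvec_sym n (A : mat n) x y : Defs.symmetric A ->
  inner x (matvec A y) = inner (matvec A x) y.
Proof.
move=> HA; rewrite /inner /matvec.
rewrite (vsum_ext (v := fun i => vsum (fun j => x i * A i j * y j))); last first.
  by move=> i; rewrite -vsum_scale; apply: vsum_ext => j; ring.
rewrite vsum_swap; apply: vsum_ext => j.
rewrite (vsum_ext (u := fun i => x i * A i j * y j) (v := fun i => y j * (A j i * x i))).
  by rewrite vsum_scale; ring.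
by move=> i; rewrite (HA i j); ring.
Qed.

Lemma matvec_comp n (A B : mat n) v : matvec A (matvec B v) = matvec (matmul A B) v.
Proof.
apply: functional_extensionality => i; rewrite /matvec /matmul.
rewrite (vsum_ext (v := fun j => vsum (fun k => A i j * B j k * v k))); last first.
  by move=> j; rewrite -vsum_scale; apply: vsum_ext => k; ring.
rewrite vsum_swap; apply: vsum_ext => k.
rewrite (vsum_ext (u := fun j => A i j * B j k * v k) (v := fun j => v k * (A i j * B j k))).
  by rewrite vsum_scale; ring.
by move=> j; ring.
Qed.

Lemma matvec_id n (v : vec n) : matvec (@idmat n) v = v.
Proof.
apply: functional_extensionality => i; rewrite /matvec /idmat /vsum.
rewrite (bigD1 i) //= eqxx big1 /=; first ring.
by move=> j /negbTE Hj; rewrite eq_sym Hj; ring.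
Qed.

Lemma quad_CS (al be ga : R) : 0 <= al -> 0 <= ga ->
  (forall t, 0 <= al + 2 * t * be + t * t * ga) -> be * be <= al * ga.
Proof.
move=> Ha Hg H.
case: (Rle_lt_or_eq_dec 0 ga Hg) => Hg'.
- have := H (- be / ga).
  have -> : al + 2 * (- be / ga) * be + (- be / ga) * (- be / ga) * ga
          = al - be * be / ga by field; lra.
  move=> H1.
  have : 0 <= (al - be * be / ga) * ga by apply: Rmult_le_pos; lra.
  have -> : (al - be * be / ga) * ga = al * ga - be * be by field; lra.
  lra.
- subst ga. case: (Req_dec be 0) => Hb; first by subst; lra.
  have := H (- (al + 1) / (2 * be)).
  have -> : al + 2 * (- (al + 1) / (2 * be)) * be + (- (al + 1) / (2 * be)) * (- (al + 1) / (2 * be)) * 0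
          = -1 by field.
  lra.
Qed.

Lemma norm2_addscale n (x y : vec n) t :
  norm2 (vadd x (vscale t y)) = norm2 x + 2 * t * inner x y + t * t * norm2 y.
Proof.
rewrite /norm2 !inner_addl !inner_addr !inner_scalel !inner_scaler (inner_sym y x); ring.
Qed.

Lemma inner_CS n (x y : vec n) : inner x y * inner x y <= norm2 x * norm2 y.
Proof.
apply: quad_CS; try exact: norm2_ge0.
move=> t; rewrite -norm2_addscale; exact: norm2_ge0.
Qed.

Lemma inner_le_norm n (x y : vec n) : inner x y <= norm x * norm y.
Proof.
have H := inner_CS x y. rewrite -!norm_sq in H.
have := norm_ge0 x; have := norm_ge0 y => Hy Hx.
set i := inner x y in H *; set a := norm x in H Hx *; set b := norm y in H Hy *.
case: (Rle_lt_dec i (a * b)) => // Hlt.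
have : (a * b) * (a * b) < i * i by apply: Rmult_le_0_lt_compat; nra.
nra.
Qed.

Lemma Lam_CS n (A : mat n) (x y : vec n) : Defs.symmetric A ->
  (forall u : vec n, 0 <= inner u (matvec A u)) ->
  inner (matvec A x) y * inner (matvec A x) y <= inner x (matvec A x) * inner y (matvec A y).
Proof.
move=> HA Hpos; apply: quad_CS; try exact: Hpos.
move=> t; have := Hpos (vadd x (vscale t y)).
rewrite matvec_add matvec_scale !inner_addl !inner_addr !inner_scalel !inner_scaler.
rewrite (inner_matvec_sym x y HA) (inner_sym y (matvec A x)); lra.
Qed.

Lemma norm2_scale n a (x : vec n) : norm2 (vscale a x) = a * a * norm2 x.
Proof. rewrite /norm2 inner_scalel inner_scaler; ring. Qed.

Lemma norm_scale n a (x : vec n) : norm (vscale a x) = Rabs a * norm x.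
Proof.
rewrite /norm norm2_scale sqrt_mult; [|nra|exact: norm2_ge0].
by rewrite -Rsqr_def sqrt_Rsqr_abs.
Qed.

Lemma small_t (X Y C : R) : (forall t, 0 < t < 1 -> X <= Y + t * C) -> X <= Y.
Proof.
move=> H; case: (Rle_lt_dec X Y) => // Hlt; exfalso.
case: (Rle_lt_dec C 0) => HC.
- have := H (/2) ltac:(lra). nra.
- set t := Rmin (/2) ((X - Y) / (2 * C)).
  have Ht1 : t <= /2 by apply: Rmin_l.
  have Ht2 : t <= (X - Y) / (2 * C) by apply: Rmin_r.
  have Ht0 : 0 < t.
    rewrite /t /Rmin; case: Rle_dec => _; first lra.
    apply: Rdiv_lt_0_compat; lra.
  have := H t ltac:(lra).
  have : t * C <= (X - Y) / (2 * C) * C by apply: Rmult_le_compat_r; lra.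
  have -> : (X - Y) / (2 * C) * C = (X - Y) / 2 by field; lra.
  lra.
Qed.

Lemma normA2_subscale n (A : mat n) (v h : vec n) t : Defs.symmetric A ->
  normA2 A (vsub v (vscale t h)) = normA2 A v - 2 * t * inner h (matvec A v) + t * t * normA2 A h.
Proof.
move=> HA; rewrite /normA2 matvec_sub matvec_scale !inner_subl !inner_subr !inner_scalel !inner_scaler.
rewrite (inner_matvec_sym v h HA) (inner_sym (matvec A v) h); ring.
Qed.

Lemma norm2_convcomb n (w p : vec n) t :
  norm2 (vadd (vscale t w) (vscale (1 - t) p)) =
  t * norm2 w + (1 - t) * norm2 p - t * (1 - t) * norm2 (vsub w p).
Proof.
have E1 : vadd (vscale t w) (vscale (1 - t) p) = vadd p (vscale t (vsub w p)).
  apply: functional_extensionality => i; rewrite /vadd /vscale /vsub; ring.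
have E2 : w = vadd p (vscale 1 (vsub w p)).
  apply: functional_extensionality => i; rewrite /vadd /vscale /vsub; ring.
rewrite E1 {2}E2 !norm2_addscale; ring.
Qed.

Lemma prox_ineq n (Lam : mat n) (r : vec n -> ereal) mur z p w rp rw :
  Defs.symmetric Lam ->
  ext_convex (fun x => ER_addR (- (mur / 2 * norm2 x)) (r x)) ->
  is_prox Lam r z p -> r p = Some rp -> r w = Some rw ->
  rp + inner (vsub w p) (matvec Lam (vsub z p)) + mur / 2 * norm2 (vsub w p) <= rw.
Proof.
move=> HA Hconv Hprox Hp Hw.
set h := vsub w p; set v := vsub z p.
apply: (small_t (C := mur / 2 * norm2 h + / 2 * normA2 Lam h)) => t Ht.
have Hc := Hconv w p t Ht.
set y := vadd (vscale t w) (vscale (1 - t) p) in Hc.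
have Hpr := Hprox y.
rewrite Hw Hp in Hc; rewrite Hp in Hpr.
case Hy: (r y) => [ry|]; rewrite Hy in Hc Hpr; last by [].
simpl in Hc, Hpr.
rewrite /y norm2_convcomb -/h in Hc.
have Ezy : vsub z y = vsub v (vscale t h).
  apply: functional_extensionality => i; rewrite /v /h /y /vadd /vscale /vsub; ring.
rewrite Ezy normA2_subscale // in Hpr.
set B := inner h (matvec Lam v) in Hpr *.
have key : t * (rp + B + mur / 2 * norm2 h) <= t * (rw + t * (mur / 2 * norm2 h + / 2 * normA2 Lam h)).
  change (vsub z p) with v in Hpr; lra.
apply: Rmult_le_reg_l key; lra.
Qed.

Lemma Rabs_bounds x a : Rabs x <= a -> - a <= x <= a.
Proof.
move=> H; have := Rle_abs x; have := Rle_abs (- x); rewrite Rabs_Ropp; lra.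
Qed.

Lemma small_t0 (X Y C t0 : R) : 0 < t0 ->
  (forall t, 0 < t < t0 -> X <= Y + t * C) -> X <= Y.
Proof.
move=> Ht0 H; case: (Rle_lt_dec X Y) => // Hlt; exfalso.
case: (Rle_lt_dec C 0) => HC.
- have := H (t0/2) ltac:(lra). nra.
- set t := Rmin (t0/2) ((X - Y) / (2 * C)).
  have Ht1 : t <= t0/2 by apply: Rmin_l.
  have Ht2 : t <= (X - Y) / (2 * C) by apply: Rmin_r.
  have Ht0' : 0 < t.
    rewrite /t /Rmin; case: Rle_dec => _; first lra.
    apply: Rdiv_lt_0_compat; lra.
  have := H t ltac:(lra).
  have : t * C <= (X - Y) / (2 * C) * C by apply: Rmult_le_compat_r; lra.
  have -> : (X - Y) / (2 * C) * C = (X - Y) / 2 by field; lra.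
  lra.
Qed.

Lemma conv_first_order n (f : vec n -> R) gradf muf x y :
  is_gradient f gradf -> convex (fun x => f x - muf / 2 * norm2 x) ->
  f x + inner (gradf x) (vsub y x) + muf / 2 * norm2 (vsub y x) <= f y.
Proof.
move=> Hg Hc; set h := vsub y x.
apply: (small_t (C := norm h)) => eps Heps.
have [delta [Hd Hdel]] := Hg x eps (proj1 Heps).
have Hnh := norm_ge0 h.
apply: (small_t0 (C := muf / 2 * norm2 h) (t0 := Rmin 1 (delta / (norm h + 1)))).
  apply: Rmin_pos; first lra. apply: Rdiv_lt_0_compat; lra.
move=> t [Ht0 Ht1].
have Ht1a : t < 1 by apply: (Rlt_le_trans _ _ _ Ht1); apply: Rmin_l.
have Ht1b : t < delta / (norm h + 1) by apply: (Rlt_le_trans _ _ _ Ht1); apply: Rmin_r.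
have Hcv := Hc y x t ltac:(lra). simpl in Hcv.
have Ept : vadd (vscale t y) (vscale (1 - t) x) = vadd x (vscale t h).
  apply: functional_extensionality => i; rewrite /vadd /vscale /h /vsub; ring.
have Ey : y = vadd x (vscale 1 h).
  apply: functional_extensionality => i; rewrite /vadd /vscale /h /vsub; ring.
have Eny : norm2 y = norm2 (vadd x (vscale 1 h)) by rewrite -Ey.
rewrite Ept Eny !norm2_addscale in Hcv.
have Hnt : norm (vscale t h) < delta.
  rewrite norm_scale Rabs_pos_eq; last lra.
  have : t * (norm h + 1) < delta.
    have := Rmult_lt_compat_r (norm h + 1) _ _ ltac:(lra) Ht1b.
    by rewrite /Rdiv Rmult_assoc Rinv_l; lra.
  nra.
have Hgr := Hdel _ Hnt.
rewrite inner_scaler norm_scale (Rabs_pos_eq t) in Hgr; last lra.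
have Hab := Rabs_bounds Hgr.
have key : t * (f x + inner (gradf x) h + muf / 2 * norm2 h)
        <= t * (f y + eps * norm h + t * (muf / 2 * norm2 h)).
  case: Hab => Hab1 Hab2. lra.
apply: Rmult_le_reg_l key; lra.
Qed.

Lemma deriv_line n (f : vec n -> R) gradf x h t : is_gradient f gradf ->
  derivable_pt_lim (fun s => f (vadd x (vscale s h))) t (inner (gradf (vadd x (vscale t h))) h).
Proof.
move=> Hg eps Heps.
set y0 := vadd x (vscale t h).
have Hnh := norm_ge0 h.
have He' : 0 < eps / (2 * (norm h + 1)) by apply: Rdiv_lt_0_compat; lra.
have [delta [Hd Hdel]] := Hg y0 _ He'.
have Hdp : 0 < delta / (norm h + 1) by apply: Rdiv_lt_0_compat; lra.
exists (mkposreal _ Hdp) => hh Hh0 Hhh; simpl in Hhh.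
have E : vadd x (vscale (t + hh) h) = vadd y0 (vscale hh h).
  apply: functional_extensionality => i; rewrite /y0 /vadd /vscale; ring.
rewrite E.
have Hn : norm (vscale hh h) < delta.
  rewrite norm_scale.
  have := Rmult_lt_compat_r (norm h + 1) _ _ ltac:(lra) Hhh.
  rewrite /Rdiv Rmult_assoc Rinv_l; last lra.
  have := Rabs_pos hh. nra.
have Hgr := Hdel _ Hn.
rewrite inner_scaler norm_scale in Hgr.
set D := f (vadd y0 (vscale hh h)) - f y0 - hh * inner (gradf y0) h in Hgr.
have -> : (f (vadd y0 (vscale hh h)) - f y0) / hh - inner (gradf y0) h = D / hh.
  rewrite /D; field; exact Hh0.
rewrite /Rdiv Rabs_mult Rabs_inv.
have Hah : 0 < Rabs hh by apply: Rabs_pos_lt.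
apply: (Rmult_lt_reg_r (Rabs hh)) => //.
rewrite Rmult_assoc Rinv_l; last lra.
have : eps / (2 * (norm h + 1)) * (Rabs hh * norm h) < eps * Rabs hh.
  have -> : eps / (2 * (norm h + 1)) * (Rabs hh * norm h)
          = eps * Rabs hh * (norm h / (2 * (norm h + 1))) by field; lra.
  have : norm h / (2 * (norm h + 1)) < 1.
    apply: (Rmult_lt_reg_r (2 * (norm h + 1))); first lra.
    rewrite /Rdiv Rmult_assoc Rinv_l; lra.
  have : 0 < eps * Rabs hh by nra.
  nra.
lra.
Qed.

Lemma deriv_poly A B t : derivable_pt_lim (fun s => s * A + B * (s * s)) t (A + 2 * B * t).
Proof.
move=> eps Heps.
have Hp : 0 < eps / (Rabs B + 1) by apply: Rdiv_lt_0_compat; have := Rabs_pos B; lra.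
exists (mkposreal _ Hp) => hh Hh0 Hhh; simpl in Hhh.
have -> : ((t + hh) * A + B * ((t + hh) * (t + hh)) - (t * A + B * (t * t))) / hh - (A + 2 * B * t)
        = B * hh by field.
rewrite Rabs_mult.
have HB := Rabs_pos B.
have := Rmult_lt_compat_r (Rabs B + 1) _ _ ltac:(lra) Hhh.
rewrite /Rdiv Rmult_assoc Rinv_l; last lra.
have := Rabs_pos hh. nra.
Qed.

Lemma descent n (f : vec n -> R) gradf L x y :
  is_gradient f gradf -> lipschitz L gradf ->
  f y <= f x + inner (gradf x) (vsub y x) + L / 2 * norm2 (vsub y x).
Proof.
move=> Hg HL; set h := vsub y x.
set A := inner (gradf x) h.
set phi := fun s => f (vadd x (vscale s h)) - (s * A + (L / 2 * norm2 h) * (s * s)).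
set phi' := fun s => inner (gradf (vadd x (vscale s h))) h - (A + 2 * (L / 2 * norm2 h) * s).
have [c [Hc Hc01]] : exists c, phi 1 - phi 0 = phi' c * (1 - 0) /\ 0 < c < 1.
  apply: MVT_cor2; first lra.
  move=> c _; apply: derivable_pt_lim_minus.
  - exact: deriv_line.
  - exact: deriv_poly.
have E1 : vadd x (vscale 1 h) = y.
  apply: functional_extensionality => i; rewrite /h /vadd /vscale /vsub; ring.
have E0 : vadd x (vscale 0 h) = x.
  apply: functional_extensionality => i; rewrite /vadd /vscale; ring.
rewrite /phi /phi' E1 E0 in Hc.
have Hd : inner (gradf (vadd x (vscale c h))) h - A <= L * c * norm2 h.
  rewrite /A -inner_subl.
  have H1 := inner_le_norm (vsub (gradf (vadd x (vscale c h))) (gradf x)) h.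
  have H2 := HL (vadd x (vscale c h)) x.
  have E : vsub (vadd x (vscale c h)) x = vscale c h.
    apply: functional_extensionality => i; rewrite /vadd /vscale /vsub; ring.
  rewrite E norm_scale Rabs_pos_eq in H2; last lra.
  have := norm_ge0 h; have := norm_sq h.
  have := Rmult_le_compat_r (norm h) _ _ (norm_ge0 h) H2. nra.
lra.
Qed.

Lemma Rdiv_le_0_compat x y : 0 <= x -> 0 < y -> 0 <= x / y.
Proof. move=> Hx Hy; apply: Rmult_le_pos => //; left; exact: Rinv_0_lt_compat. Qed.

Lemma sqrt_sq_ge x : 0 <= sqrt x /\ x <= sqrt x * sqrt x.
Proof.
split; first exact: sqrt_pos.
case: (Rle_lt_dec 0 x) => H.
- rewrite sqrt_sqrt //; lra.
- rewrite sqrt_neg_0; lra.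
Qed.

Lemma factor_bound mub c b1 b2 tau s s2 sm a b :
  0 < sm -> sm * sm = mub -> s2 * s2 = b2 -> s2 * sm = c -> 0 <= s ->
  b1 + b2 + tau <= s * s ->
  mub * (a - (s + s2) / sm * b) * (a - (s2 - s) / sm * b)
    <= mub * a * a - 2 * c * a * b - (b1 + tau) * b * b.
Proof.
move=> Hsm Hmub Hb2 Hc Hs Hss.
have -> : mub * (a - (s + s2) / sm * b) * (a - (s2 - s) / sm * b)
   = mub * a * a - 2 * (s2 * sm) * a * b + (s2 * s2 - s * s) * b * b.
  rewrite -Hmub; field; lra.
rewrite Hc Hb2. nra.
Qed.

Definition qconst (mub tau : R) : R :=
  (2 + / tau) / (mub * ((1 - / sqrt (1 + tau)) * (1 - / sqrt (1 + tau)))) + 1.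

Lemma final_stoch mub c b1 tau a b e :
  0 < mub -> 0 <= c -> 0 < tau -> 0 <= a -> 0 <= b -> 0 <= e ->
  mub * a * a <= 2 * c * a * b + b1 * b * b + 2 * e * (a + b) ->
  a * a <= (1 + tau) / mub * (sqrt (b1 + c ^ 2 / mub + tau) + sqrt (c ^ 2 / mub)) ^ 2 * (b * b)
           + qconst mub tau * qconst mub tau * (e * e).
Proof.
move=> Hmub Hc Htau Ha Hb He Hmain.
set b2 := c ^ 2 / mub.
set s := sqrt (b1 + b2 + tau); set s2 := sqrt b2; set sm := sqrt mub.
set rho := sqrt (1 + tau).
have [Hs Hss] := sqrt_sq_ge (b1 + b2 + tau). rewrite -/s in Hs Hss.
have Hsm : 0 < sm by apply: sqrt_lt_R0.
have Hsmsq : sm * sm = mub by apply: sqrt_sqrt; lra.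
have Hb2 : 0 <= b2 by rewrite /b2; apply: Rdiv_le_0_compat; nra.
have Hs2sq : s2 * s2 = b2 by apply: sqrt_sqrt.
have Hs2 : 0 <= s2 by apply: sqrt_pos.
have Hs2c : s2 * sm = c.
  rewrite /s2 /sm -sqrt_mult //; last lra.
  have -> : b2 * mub = c * c by rewrite /b2; field; lra.
  by rewrite sqrt_square.
have Hrho : rho * rho = 1 + tau by apply: sqrt_sqrt; lra.
have Hrho1 : 1 < rho.
  have H := sqrt_lt_1 1 (1 + tau) ltac:(lra) ltac:(lra) ltac:(lra); rewrite sqrt_1 in H; exact: H.
set K := (s + s2) / sm.
set K' := (s2 - s) / sm.
have HK : 0 <= K by rewrite /K; apply: Rdiv_le_0_compat; lra.
have HKK : K' <= K.
  rewrite /K /K' /Rdiv; apply: Rmult_le_compat_r; last lra.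
  by apply: Rlt_le; apply: Rinv_0_lt_compat.
have HB1 : (1 + tau) / mub * (s + s2) ^ 2 = (rho * K) * (rho * K).
  have -> : rho * K * (rho * K) = (rho * rho) * (K * K) by ring.
  rewrite Hrho /K -Hsmsq; field; lra.
rewrite HB1.
set th := 1 - / rho.
have Hth : 0 < th.
  rewrite /th; have : / rho < 1 by rewrite -Rinv_1; apply: Rinv_lt_contravar; lra.
  lra.
set q := qconst mub tau.
have Hq : q = (2 + / tau) / (mub * (th * th)) + 1 by [].
have Hpos : 0 < mub * (th * th) by apply: Rmult_lt_0_compat; [lra | apply: Rmult_lt_0_compat; lra].
have Hit : 0 < / tau by apply: Rinv_0_lt_compat.
have Hfr : 0 < (2 + / tau) / (mub * (th * th)) by apply: Rdiv_lt_0_compat; lra.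
have Hqge1 : 1 <= q by rewrite Hq; lra.
have Hqp : 0 < q by lra.
have Hq1 : (2 + / tau) / q < mub * (th * th).
  apply: (Rmult_lt_reg_r q) => //.
  rewrite /Rdiv Rmult_assoc Rinv_l; last lra.
  rewrite Hq. rewrite Rmult_plus_distr_l Rmult_1_r.
  have -> : mub * (th * th) * ((2 + / tau) * / (mub * (th * th))) = 2 + / tau by field; lra.
  lra.
case: (Rle_lt_dec (a * a) ((rho * K) * (rho * K) * (b * b) + q * q * (e * e))) => // Hlt.
exfalso.
have HrK : 0 <= rho * K by nra.
have Ha1 : rho * K * b < a.
  case: (Rlt_le_dec (rho * K * b) a) => // H.
  have : a * a <= (rho * K * b) * (rho * K * b) by apply: Rmult_le_compat; lra.
  have : 0 <= q * q * (e * e) by nra. nra.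
have Ha2 : q * e < a.
  case: (Rlt_le_dec (q * e) a) => // H.
  have : a * a <= (q * e) * (q * e) by apply: Rmult_le_compat; lra.
  have : 0 <= rho * K * (rho * K) * (b * b) by nra. nra.
have Hapos : 0 < a by nra.
have Hfb := @factor_bound mub c b1 b2 tau s s2 sm a b Hsm Hsmsq Hs2sq Hs2c Hs Hss.
rewrite -/K -/K' in Hfb.
have HKb : K * b <= a / rho.
  apply: (Rmult_le_reg_l rho); first lra.
  have -> : rho * (a / rho) = a by field; lra.
  nra.
have Hd1 : th * a <= a - K * b.
  have -> : th * a = a - a / rho by rewrite /th; field; lra.
  lra.
have Hd2 : a - K * b <= a - K' * b by nra.
have Hlow : mub * (th * th) * (a * a) <= mub * a * a - 2 * c * a * b - (b1 + tau) * b * b.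
  have : (th * a) * (th * a) <= (a - K * b) * (a - K' * b).
    apply: Rmult_le_compat; nra.
  nra.
have Hyoung : 2 * e * b - tau * b * b <= e * e / tau.
  have : 0 <= (e - tau * b) * (e - tau * b) / tau.
    apply: Rdiv_le_0_compat; [exact: (Rle_0_sqr (e - tau * b)) | lra].
  have -> : (e - tau * b) * (e - tau * b) / tau = e * e / tau - 2 * e * b + tau * b * b by field; lra.
  lra.
have Hup : mub * a * a - 2 * c * a * b - (b1 + tau) * b * b <= 2 * e * a + e * e / tau by nra.
have He1 : e < a / q.
  apply: (Rmult_lt_reg_l q); first lra.
  have -> : q * (a / q) = a by field; lra.
  lra.
have He2 : e * e <= a * a / (q * q).
  have -> : a * a / (q * q) = (a / q) * (a / q) by field; lra.
  apply: Rmult_le_compat; lra.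
have Hup2 : 2 * e * a + e * e / tau <= (a * a) * ((2 + / tau) / q).
  have H1 : 2 * e * a <= 2 * (a * a) / q.
    have -> : 2 * (a * a) / q = 2 * a * (a / q) by field; lra.
    nra.
  have H2 : e * e / tau <= (a * a) / q / tau.
    apply: Rmult_le_compat_r; first lra.
    apply: (Rle_trans _ _ _ He2).
    apply: Rmult_le_compat_l; first nra.
    apply: Rinv_le_contravar; nra.
  have -> : a * a * ((2 + / tau) / q) = 2 * (a * a) / q + a * a / q / tau by field; lra.
  lra.
have : (a * a) * ((2 + / tau) / q) < (a * a) * (mub * (th * th)).
  apply: Rmult_lt_compat_l; nra.
nra.
Qed.

Lemma final_exact mub c b1 a b :
  0 < mub -> 0 <= c -> 0 <= a -> 0 <= b ->
  mub * a * a <= 2 * c * a * b + b1 * b * b ->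
  a * a <= (1 + 0) / mub * (sqrt (b1 + c ^ 2 / mub + 0) + sqrt (c ^ 2 / mub)) ^ 2 * (b * b).
Proof.
move=> Hmub Hc Ha Hb Hmain.
set b2 := c ^ 2 / mub.
set s := sqrt (b1 + b2 + 0); set s2 := sqrt b2; set sm := sqrt mub.
have [Hs Hss] := sqrt_sq_ge (b1 + b2 + 0). rewrite -/s in Hs Hss.
have Hsm : 0 < sm by apply: sqrt_lt_R0.
have Hsmsq : sm * sm = mub by apply: sqrt_sqrt; lra.
have Hb2 : 0 <= b2 by rewrite /b2; apply: Rdiv_le_0_compat; nra.
have Hs2sq : s2 * s2 = b2 by apply: sqrt_sqrt.
have Hs2 : 0 <= s2 by apply: sqrt_pos.
have Hs2c : s2 * sm = c.
  rewrite /s2 /sm -sqrt_mult //; last lra.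
  have -> : b2 * mub = c * c by rewrite /b2; field; lra.
  by rewrite sqrt_square.
set K := (s + s2) / sm.
set K' := (s2 - s) / sm.
have HK : 0 <= K by rewrite /K; apply: Rdiv_le_0_compat; lra.
have HKK : K' <= K.
  rewrite /K /K' /Rdiv; apply: Rmult_le_compat_r; last lra.
  by apply: Rlt_le; apply: Rinv_0_lt_compat.
have HB1 : (1 + 0) / mub * (s + s2) ^ 2 = K * K.
  rewrite /K -Hsmsq; field; lra.
rewrite HB1.
case: (Rle_lt_dec (a * a) (K * K * (b * b))) => // Hlt.
exfalso.
have Ha1 : K * b < a.
  case: (Rlt_le_dec (K * b) a) => // H.
  have : a * a <= (K * b) * (K * b) by apply: Rmult_le_compat; nra.
  nra.
have Hfb := @factor_bound mub c b1 b2 0 s s2 sm a b Hsm Hsmsq Hs2sq Hs2c Hs Hss.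
rewrite -/K -/K' in Hfb.
have : 0 < (a - K * b) * (a - K' * b) by apply: Rmult_lt_0_compat; nra.
nra.
Qed.

Lemma core n L muf mur lm lM (f : vec n -> R) gradf r (Lam Laminv : mat n) xstar g x p :
  setting L muf mur lm lM f gradf r Lam Laminv xstar ->
  is_prox_grad_point Lam Laminv r g x p ->
  mubar muf mur * norm2 (vsub x xstar) <=
    2 * inner (matvec Lam (vsub x p)) (vsub x xstar) + 2 * mur * inner (vsub x p) (vsub x xstar)
    - 2 * inner (matvec Lam (vsub x p)) (vsub x p) - mur * norm2 (vsub x p) + L * norm2 (vsub x p)
    + 2 * inner (vsub (gradf x) g) (vsub (vsub x xstar) (vsub x p)).
Proof.
move=> [[Hgrad _] [_ [_ [Hprop [HLip [Hfc [Hrcv [[Hsym _] [Hlw [HLinv [_ Hmin]]]]]]]]]]] Hprox.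
rewrite /is_prox_grad_point in Hprox.
set z := vsub x (matvec Laminv g) in Hprox.
have [rp Hrp] : exists rp, r p = Some rp.
  case: Hprop => w0 Hw0; have := Hprox w0.
  case: (r p) => [rp|] /=; first by exists rp.
  by case: (r w0) Hw0.
have Hm := Hmin p; rewrite /psi Hrp in Hm.
have [rs Hrs] : exists rs, r xstar = Some rs.
  move: Hm; case: (r xstar) => [rs|] /=; first by exists rs. by [].
rewrite Hrs /= in Hm.
have Hpx := prox_ineq Hsym Hrcv Hprox Hrp Hrs.
have Ez : matvec Lam (vsub z p) = vsub (matvec Lam (vsub x p)) g.
  have -> : vsub z p = vsub (vsub x p) (matvec Laminv g).
    apply: functional_extensionality => i; rewrite /z /vsub; ring.
  by rewrite matvec_sub matvec_comp HLinv matvec_id.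
rewrite Ez in Hpx.
have Hcf := conv_first_order x xstar Hgrad Hfc.
have Hds := descent x p Hgrad HLip.
set F := vsub x p in Hpx Hds *; set d := vsub x xstar in Hcf *.
have E1 : vsub xstar p = vsub F d.
  apply: functional_extensionality => i; rewrite /F /d /vsub; ring.
have E2 : vsub xstar x = vscale (-1) d.
  apply: functional_extensionality => i; rewrite /d /vsub /vscale; ring.
have E3 : vsub p x = vscale (-1) F.
  apply: functional_extensionality => i; rewrite /F /vsub /vscale; ring.
rewrite E1 in Hpx; rewrite E2 in Hcf; rewrite E3 in Hds.
clearbody F d.
rewrite /norm2 in Hpx Hcf Hds *.
rewrite !inner_subl !inner_subr !inner_scalel !inner_scaler in Hpx Hcf Hds *.
rewrite /mubar.
rewrite ?(inner_sym F d) ?(inner_sym (matvec Lam F) d) ?(inner_sym (matvec Lam F) F) in Hpx Hcf Hds *.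
rewrite ?(inner_sym (gradf x) d) ?(inner_sym (gradf x) F) ?(inner_sym g d) ?(inner_sym g F) in Hpx Hcf Hds *.
lra.
Qed.

Lemma norm2_dim0 (v : vec 0) : norm2 v = 0.
Proof. by rewrite /norm2 /inner /vsum big_ord0. Qed.

Lemma norm2_ones n : 1 <= norm2 (fun _ : 'I_n.+1 => 1).
Proof.
rewrite /norm2 /inner /vsum big_ord_recl.
have : 0 <= \big[Rplus/0]_(i < n) (1 * 1).
  have := @vsum_le n (fun _ => 0) (fun _ => 1 * 1) ltac:(intros; lra).
  by rewrite vsum0.
lra.
Qed.

Lemma inner_ge_neg_norm n (x y : vec n) : - (norm x * norm y) <= inner x y.
Proof.
have := inner_le_norm x (vscale (-1) y).
rewrite inner_scaler norm_scale Rabs_Ropp Rabs_R1; lra.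
Qed.

Lemma qconst_ge1 mub tau : 0 < mub -> 0 < tau -> 1 <= qconst mub tau.
Proof.
move=> Hm Ht; rewrite /qconst.
set rho := sqrt (1 + tau).
have Hrho1 : 1 < rho.
  have H := sqrt_lt_1 1 (1 + tau) ltac:(lra) ltac:(lra) ltac:(lra); rewrite sqrt_1 in H; exact: H.
set th := 1 - / rho.
have Hth : 0 < th.
  rewrite /th; have : / rho < 1 by rewrite -Rinv_1; apply: Rinv_lt_contravar; lra.
  lra.
have Hit : 0 < / tau by apply: Rinv_0_lt_compat.
have : 0 < (2 + / tau) / (mub * (th * th)).
  apply: Rdiv_lt_0_compat; first lra.
  apply: Rmult_lt_0_compat; [lra | apply: Rmult_lt_0_compat; lra].
lra.
Qed.

Lemma bound_terms n L muf mur lm lM (f : vec n -> R) gradf r (Lam Laminv : mat n) xstar g x p :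
  0 < lm -> 0 <= mur ->
  setting L muf mur lm lM f gradf r Lam Laminv xstar ->
  is_prox_grad_point Lam Laminv r g x p ->
  lm <= lM ->
  mubar muf mur * (norm (vsub x xstar) * norm (vsub x xstar)) <=
    2 * (lM + mur) * norm (vsub x xstar) * norm (vsub x p)
    + b1 L mur lm * (norm (vsub x p) * norm (vsub x p))
    + 2 * norm (vsub (gradf x) g) * (norm (vsub x xstar) + norm (vsub x p)).
Proof.
move=> Hlm Hmur Hset Hprox HlmM.
have Hc := core Hset Hprox.
case: Hset => _ [_ [_ [_ [_ [_ [_ [[Hsym _] [Hlw _]]]]]]]].
set F := vsub x p in Hc *; set d := vsub x xstar in Hc *; set e := vsub (gradf x) g in Hc *.
rewrite !norm_sq.
have Hpos : forall u : vec n, 0 <= inner u (matvec Lam u).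
  move=> u; have := Hlw u; have := norm2_ge0 u; nra.
have HX : inner (matvec Lam F) d <= lM * (norm d * norm F).
  have H := Lam_CS F d Hsym Hpos.
  have H1 := Hlw F; have H2 := Hlw d.
  rewrite -!norm_sq in H1 H2.
  have Ha := norm_ge0 d; have Hb := norm_ge0 F.
  set X := inner (matvec Lam F) d in H *.
  set Y := lM * (norm d * norm F).
  have HY : 0 <= Y by rewrite /Y; apply: Rmult_le_pos; [lra | nra].
  have HQ : X * X <= Y * Y.
    apply: (Rle_trans _ _ _ H).
    have -> : Y * Y = (lM * (norm F * norm F)) * (lM * (norm d * norm d)) by rewrite /Y; ring.
    apply: Rmult_le_compat; try apply: Hpos; lra.
  case: (Rle_lt_dec X Y) => // HXY.
  have : Y * Y < X * X by apply: Rmult_le_0_lt_compat; lra.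
  lra.
have HY : inner F d <= norm d * norm F by rewrite Rmult_comm; exact: inner_le_norm.
have HY' : mur * inner F d <= mur * (norm d * norm F) by apply: Rmult_le_compat_l.
have HZ : lm * norm2 F <= inner (matvec Lam F) F.
  by rewrite (inner_sym (matvec Lam F) F); case: (Hlw F).
have HW : inner e (vsub d F) <= norm e * (norm d + norm F).
  rewrite inner_subr.
  have := inner_le_norm e d; have := inner_ge_neg_norm e F. lra.
rewrite -/d -/F -/e. rewrite /b1. rewrite -!norm_sq in Hc HZ.
rewrite -!norm_sq. lra.
Qed.

Lemma lm_le_lM n L muf mur lm lM (f : vec n.+1 -> R) gradf r (Lam Laminv : mat n.+1) xstar :
  setting L muf mur lm lM f gradf r Lam Laminv xstar -> lm <= lM.
Proof.
case=> _ [_ [_ [_ [_ [_ [_ [_ [Hlw _]]]]]]]].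
have := Hlw (fun _ => 1); have := norm2_ones n.
move=> H1 [H2 H3].
have : (lM - lm) * norm2 (fun _ : 'I_n.+1 => 1) >= 0 by lra.
nra.
Qed.

Theorem lemma3p3 (L muf mur lm lM : R)
  (HL : 0 < L) (Hmur : 0 <= mur) (Hmubar : 0 < mubar muf mur)
  (Hlm : 0 < lm) :
  (* stochastic gradient: B2(tau) depends only on tau, L, muf, mur, lm, lM *)
  (forall tau : R, 0 < tau ->
     exists B2 : R, 0 < B2 /\
       forall (n : nat) (f : vec n -> R) (gradf : vec n -> vec n)
              (r : vec n -> ereal) (Lam Laminv : mat n) (xstar : vec n),
         setting L muf mur lm lM f gradf r Lam Laminv xstar ->
         forall (Sample : Type) (G : Sample -> vec n -> vec n)
                (x : vec n) (s : Sample) (p : vec n),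
           is_prox_grad_point Lam Laminv r (G s x) x p ->
           norm2 (vsub x xstar)
             <= B1coef L muf mur lm lM tau * norm2 (vsub x p)
                + B2 * norm2 (vsub (gradf x) (G s x)))
  /\
  (* exact gradient *)
  (forall (n : nat) (f : vec n -> R) (gradf : vec n -> vec n)
          (r : vec n -> ereal) (Lam Laminv : mat n) (xstar : vec n),
     setting L muf mur lm lM f gradf r Lam Laminv xstar ->
     forall (x p : vec n),
       is_prox_grad_point Lam Laminv r (gradf x) x p ->
       norm2 (vsub x xstar) <= B1coef L muf mur lm lM 0 * norm2 (vsub x p)).
Proof.
split.
- move=> tau Htau.
  have Hq := qconst_ge1 Hmubar Htau.
  exists (qconst (mubar muf mur) tau * qconst (mubar muf mur) tau); split; first nra.
  case=> [|n] f gradf r Lam Laminv xstar Hset Sample G x s p Hprox.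
    rewrite !norm2_dim0; lra.
  have HlmM := lm_le_lM Hset.
  have Hb := bound_terms Hlm Hmur Hset Hprox HlmM.
  have := @final_stoch (mubar muf mur) (lM + mur) (b1 L mur lm) tau
    (norm (vsub x xstar)) (norm (vsub x p)) (norm (vsub (gradf x) (G s x)))
    Hmubar ltac:(lra) Htau (norm_ge0 _) (norm_ge0 _) (norm_ge0 _) ltac:(lra).
  by rewrite !norm_sq /B1coef /b2.
- case=> [|n] f gradf r Lam Laminv xstar Hset x p Hprox.
    rewrite !norm2_dim0; lra.
  have HlmM := lm_le_lM Hset.
  have Hb := bound_terms Hlm Hmur Hset Hprox HlmM.
  have He : norm (vsub (gradf x) (gradf x)) = 0.
    have -> : vsub (gradf x) (gradf x) = vscale 0 (gradf x).
      apply: functional_extensionality => i; rewrite /vsub /vscale; ring.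
    rewrite norm_scale Rabs_R0; ring.
  rewrite He in Hb.
  have := @final_exact (mubar muf mur) (lM + mur) (b1 L mur lm)
    (norm (vsub x xstar)) (norm (vsub x p))
    Hmubar ltac:(lra) (norm_ge0 _) (norm_ge0 _) ltac:(lra).
  by rewrite !norm_sq /B1coef /b2.
Qed.
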